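(* Let $n\ge 0$, let $T$ be a triangulation of a regular polygon with $n+3$ vertices, let $\alpha,\alpha'$ be positive roots and write $S=\operatorname{Supp}\alpha$, $S'=\operatorname{Supp}\alpha'$. Then $\operatorname{Hom}_{\operatorname{Mod}{Q}_T}((M^\alpha,f^\alpha),(M^{\alpha'},f^{\alpha'}))\neq 0$ if and only if the following hold: (i) $S\cap S'\neq\emptyset$; (ii) there is no arrow in ${Q}_T$ from a vertex of $S\setminus S'$ to a vertex of $S\cap S'$; (iii) there is no arrow in ${Q}_T$ from a vertex of $S\cap S'$ to a vertex of $S'\setminus S$. In this case this Hom space is one-dimensional.
   Context: Diagonals of the polygon are called roots; those in $T$ are negative roots, indexed by a set $I$ (the one indexed by $i$ written $-\alpha_i$), and the others positive roots. $\operatorname{Supp}\alpha$ is the set of $i\in I$ with $-\alpha_i$ crossing $\alpha$. If $-\alpha_i,-\alpha_j$ bound a common triangle of $T$ with common vertex $x$, set $-\alpha_i<-\alpha_j$ if the minimal-angle rotation about $x$ sending the line through $-\alpha_i$ to that through $-\alpha_j$ is counterclockwise. ${Q}_T$ has vertex set $I$ and an arrow $j\to i$ whenever $-\alpha_i,-\alpha_j$ bound a common triangle and $-\alpha_i<-\alpha_j$. $\operatorname{Mod}{Q}_T$ is the category of finite-dimensional complex representations of ${Q}_T$ in which the composition of any two successive arrows in a triangle of ${Q}_T$ is zero. For a positive root $\alpha$, $(M^\alpha,f^\alpha)$ is the representation with $M^\alpha_i=\mathbb{C}$ for $i\in\operatorname{Supp}\alpha$, $M^\alpha_i=0$ otherwise,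 and $f^\alpha_{ij}=\mathrm{id}_{\mathbb{C}}$ on arrows between vertices of $\operatorname{Supp}\alpha$, $0$ otherwise. *)

(* Defs.v *)
From HB Require Import structures.
From mathcomp Require Import all_boot all_order all_algebra.
From mathcomp Require Import complex.
From mathcomp Require Import reals.
Set Implicit Arguments. Unset Strict Implicit. Unset Printing Implicit Defensive.
Import Order.TTheory GRing.Theory Num.Theory.
Local Open Scope ring_scope.

(* Polygon with n+3 vertices labelled 0, 1, ..., n+2 counterclockwise.      *)
Definition is_diag (n : nat) (p : 'I_n.+3 * 'I_n.+3) : bool :=
  ((p.1 : nat).+1 < p.2)%N && ~~ ((p.1 == 0 :> nat) && (p.2 == n.+2 :> nat)).

Definition diag (n : nat) := {p : 'I_n.+3 * 'I_n.+3 | is_diag p}.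

Definition dlo n (d : diag n) : 'I_n.+3 := (val d).1.
Definition dhi n (d : diag n) : 'I_n.+3 := (val d).2.

Definition epts n (d : diag n) : {set 'I_n.+3} := [set dlo d; dhi d].

Definition crosses n (d e : diag n) : bool :=
  [&& (dlo d < dlo e)%N, (dlo e < dhi d)%N & (dhi d < dhi e)%N] ||
  [&& (dlo e < dlo d)%N, (dlo d < dhi e)%N & (dhi e < dhi d)%N].

Definition triangulation n (T : {set diag n}) : bool :=
  [forall d in T, forall e in T, ~~ crosses d e] &&
  [forall d, (d \notin T) ==> [exists e in T, crosses d e]].

Definition positive_root n (T : {set diag n}) (a : diag n) : bool := a \notin T.

(* the index set I of the negative roots: the diagonals of T *)
Definition vtx n (T : {set diag n}) := {d : diag n | d \in T}.

Definition Supp n (T : {set diag n}) (a : diag n) : {set vtx T} :=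
  [set i : vtx T | crosses (val i) a].

Definition poly_edge n (y z : 'I_n.+3) : bool :=
  [|| (y : nat).+1 == z, (z : nat).+1 == y,
      ((y == 0 :> nat) && (z == n.+2 :> nat)) |
      ((z == 0 :> nat) && (y == n.+2 :> nat))].

Definition common_triangle n (T : {set diag n}) (d e : diag n) : bool :=
  (d != e) &&
  [exists x : 'I_n.+3, exists y : 'I_n.+3, exists z : 'I_n.+3,
    [&& epts d == [set x; y], epts e == [set x; z] &
        (poly_edge y z || [exists f in T, epts f == [set y; z]])]].

(* -alpha_d < -alpha_e: at the common vertex x, the rotation about x sending
   the side x--y (of d) to the side x--z (of e) through the (smaller) angle
   at x is counterclockwise; with vertices labelled counterclockwise this
   means that z comes after y when going counterclockwise around the polygon
   starting from x. *)
Definition root_lt n (d e : diag n) : bool :=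
  [exists x : 'I_n.+3, exists y : 'I_n.+3, exists z : 'I_n.+3,
    [&& epts d == [set x; y], epts e == [set x; z] &
        ((y + n.+3 - x) %% n.+3 < (z + n.+3 - x) %% n.+3)%N]].

Definition arrow n (T : {set diag n}) (j i : vtx T) : bool :=
  common_triangle T (val i) (val j) && root_lt (val i) (val j).
Arguments arrow {n} T j i.

(* Finite-dimensional representations of a quiver with vertex set I and
   arrow relation arr (arr j i = there is an arrow j -> i; in Q_T there is at
   most one arrow between two vertices).  M_i = K^(qdim i) (row vectors) and
   the map on the arrow j -> i is v |-> v *m qmap j i. *)
Record qrep (K : fieldType) (I : finType) := QRep {
  qdim : I -> nat;
  qmap : forall j i : I, 'M[K]_(qdim j, qdim i) }.

(* objects of Mod Q_T: composition of two successive arrows of a triangle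
   (three distinct pairwise adjacent vertices) of Q_T is zero *)
Definition triangle_QT n (T : {set diag n}) (i j k : vtx T) : Prop :=
  [&& [&& i != j, j != k & i != k],
      arrow T i j || arrow T j i, arrow T j k || arrow T k j &
      arrow T i k || arrow T k i].

Definition in_ModQT (K : fieldType) n (T : {set diag n}) (M : qrep K (vtx T))
  : Prop :=
  forall i j k : vtx T, triangle_QT i j k -> arrow T k j -> arrow T j i ->
    qmap M k j *m qmap M j i = 0.

(* morphisms of representations (Mod Q_T is a full subcategory, so these
   are the morphisms of Mod Q_T) *)
Definition qmorph (K : fieldType) (I : finType) (arr : rel I) (M N : qrep K I)
  (phi : forall i, 'M[K]_(qdim M i, qdim N i)) : Prop :=
  forall j i, arr j i -> qmap M j i *m phi i = phi j *m qmap N j i.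

Definition qmorph_nonzero (K : fieldType) (I : finType) (M N : qrep K I)
  (phi : forall i, 'M[K]_(qdim M i, qdim N i)) : Prop :=
  exists i, phi i != 0.

Definition Hom_nonzero (K : fieldType) (I : finType) (arr : rel I)
  (M N : qrep K I) : Prop :=
  exists phi : forall i, 'M[K]_(qdim M i, qdim N i),
    qmorph arr phi /\ qmorph_nonzero phi.

Definition Hom_dim1 (K : fieldType) (I : finType) (arr : rel I)
  (M N : qrep K I) : Prop :=
  exists phi0 : forall i, 'M[K]_(qdim M i, qdim N i), [/\ qmorph arr phi0, qmorph_nonzero phi0 &
    forall phi : forall i, 'M[K]_(qdim M i, qdim N i), qmorph arr phi -> exists c : K, forall i, phi i = c *: phi0 i].

Definition Malpha (R : realType) n (T : {set diag n}) (a : diag n)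
  : qrep R[i] (vtx T) :=
  @QRep R[i] (vtx T) (fun i => if i \in Supp T a then 1%N else 0%N)
    (fun j i => if (j \in Supp T a) && (i \in Supp T a)
                then const_mx 1 else 0).

(* Main.v *)
Require Import Defs.
From HB Require Import structures.
From mathcomp Require Import all_boot all_order all_algebra.
From mathcomp Require Import complex.
From mathcomp Require Import reals.
From mathcomp Require Import zify.
Set Implicit Arguments. Unset Strict Implicit. Unset Printing Implicit Defensive.

Definition crossn (a b c d : nat) : bool :=
  [&& a < c, c < b & b < d] || [&& c < a, a < d & d < b].

Lemma crossesE n (d e : diag n) : crosses d e = crossn (dlo d) (dhi d) (dlo e) (dhi e).
Proof. by []. Qed.

Definition inTn n (T : {set diag n}) (x y : nat) : bool :=
  [exists d in T, (dlo d == x :> nat) && (dhi d == y :> nat)].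

Lemma diag_bounds n (d : diag n) :
  [/\ (dlo d).+1 < dhi d, dhi d < n.+3 & ~~ ((dlo d == 0 :> nat) && (dhi d == n.+2 :> nat))].
Proof.
case: d => [[x y] h]; rewrite /dlo /dhi /=; case/andP: h => h1 h2; split => //.
Qed.

Lemma inTn_bounds n (T : {set diag n}) x y : inTn T x y ->
  [/\ x.+1 < y, y < n.+3 & ~~ ((x == 0) && (y == n.+2))].
Proof.
case/existsP => d /andP[_ /andP[/eqP<- /eqP<-]]; exact: diag_bounds.
Qed.

Lemma inTnI n (T : {set diag n}) d : d \in T -> inTn T (dlo d) (dhi d).
Proof. by move=> dT; apply/existsP; exists d; rewrite dT !eqxx. Qed.

Lemma tri_nc_d n (T : {set diag n}) : triangulation T -> forall d e, d \in T -> e \in T ->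
  ~~ crosses d e.
Proof.
case/andP => /forallP hnc _ d e dT eT.
by move: (hnc d) => /implyP/(_ dT)/forallP/(_ e)/implyP/(_ eT).
Qed.

Lemma tri_nc n (T : {set diag n}) a b c d : triangulation T -> inTn T a b -> inTn T c d ->
  ~~ crossn a b c d.
Proof.
move=> hT /existsP[x /andP[xT /andP[/eqP hx1 /eqP hx2]]] /existsP[y /andP[yT /andP[/eqP hy1 /eqP hy2]]].
subst a b c d; rewrite -crossesE; exact: (tri_nc_d hT xT yT).
Qed.

Lemma tri_max n (T : {set diag n}) x y : triangulation T -> x.+1 < y -> y < n.+3 ->
  ~~ ((x == 0) && (y == n.+2)) -> ~~ inTn T x y ->
  exists p q, inTn T p q /\ crossn x y p q.
Proof.
case/andP => _ /forallP hmax hxy hy h0 hnot.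
have hx : x < n.+3 by lia.
have hd : is_diag (Ordinal hx, Ordinal hy) by rewrite /is_diag /= hxy.
pose d : diag n := exist (fun p => is_diag p) _ hd.
have dT : d \notin T.
  apply/negP => dT; move/negP: hnot; apply; apply/existsP; exists d; by rewrite dT /= !eqxx.
move: (hmax d) => /implyP/(_ dT)/existsP[e /andP[eT he]].
exists (dlo e), (dhi e); split; first exact: inTnI.
exact: he.
Qed.

Definition TE n (T : {set diag n}) x y := (x.+1 == y) || inTn T x y.
Definition TO n (T : {set diag n}) x y := inTn T x y || ((x == 0) && (y == n.+2)).

Lemma ncTE n (T : {set diag n}) a b x y : triangulation T -> inTn T a b -> TE T x y ->
  ~~ crossn a b x y.
Proof.
move=> hT hab /orP[/eqP <-|hxy]; first by rewrite /crossn; lia.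
exact: (tri_nc hT hab hxy).
Qed.

Lemma ncTO n (T : {set diag n}) a b x y : triangulation T -> inTn T a b -> TO T x y ->
  ~~ crossn a b x y.
Proof.
move=> hT hab /orP[hxy|/andP[/eqP -> /eqP ->]]; first exact: (tri_nc hT hab hxy).
case: (inTn_bounds hab) => *; rewrite /crossn; lia.
Qed.

Lemma TO_bounds n (T : {set diag n}) a b : TO T a b -> a.+1 < b /\ b < n.+3.
Proof. case/orP => [/inTn_bounds[]|/andP[/eqP-> /eqP->]] //; lia. Qed.

Lemma tri_inside n (T : {set diag n}) a b : triangulation T -> TO T a b ->
  exists c, [/\ a < c < b, TE T a c & TE T c b].
Proof.
move=> hT hab; case: (TO_bounds hab) => hab1 hb.
have hex : exists x, (x < b) && TE T a x by exists a.+1; rewrite /TE eqxx hab1.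
have hub : forall x, (x < b) && TE T a x -> x <= b by move=> x /andP[? _]; lia.
case: (ex_maxnP hex hub) => c /andP[hcb hac] hmaxc.
have hac1 : a < c by case/orP: hac => [/eqP <-|/inTn_bounds[]] //; lia.
exists c; split => //; first by apply/andP.
rewrite /TE; case E1: (c.+1 == b) => //=.
case E2: (inTn T c b) => //; exfalso.
have hc1 : c.+1 < b by lia.
have hc0 : ~~ ((c == 0) && (b == n.+2)) by lia.
have [p [q [hpq hcr]]] := tri_max hT hc1 hb hc0 (negbT E2).
have h2 : ~~ crossn a b p q.
  case/orP: hab => [hab|/andP[/eqP-> /eqP->]]; first exact: (tri_nc hT hab hpq).
  case: (inTn_bounds hpq) => *; rewrite /crossn; lia.
have h3 : ~~ crossn a c p q.
  case/orP: hac => [/eqP <-|hac]; first by rewrite /crossn; lia.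
  exact: (tri_nc hT hac hpq).
have h4 : (p == a) -> (q < b) -> q <= c.
  move=> /eqP hp hq; apply: hmaxc; rewrite hq /TE; apply/orP; right; by rewrite -hp.
case: (inTn_bounds hpq) => *.
move: hcr h2 h3 h4; rewrite /crossn; lia.
Qed.

Lemma tri_above n (T : {set diag n}) a b : triangulation T -> inTn T a b ->
  exists u c v, [/\ u < c < v, TO T u v &
     ((u == a) && (c == b) && TE T c v) || ((c == a) && (v == b) && TE T u c)].
Proof.
move=> hT hab; case: (inTn_bounds hab) => hab1 hb hab0.
pose P k := [exists u : 'I_n.+3, exists v : 'I_n.+3,
   [&& (v - u == k), u <= a, b <= v, ((u != a :> nat) || (v != b :> nat)) & TO T u v]].
have hex : exists k, P k.
  exists n.+2; apply/existsP; exists ord0; apply/existsP; exists ord_max => /=.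
  rewrite /TO orbC eqxx /= subn0 eqxx /=.
  lia.
case: (ex_minnP hex) => k /existsP[u /existsP[v /and5P[/eqP hk hua hbv hne huv]]] hmin.
case: (tri_inside hT huv) => c [/andP[huc hcv] hTuc hTcv].
case: (TO_bounds huv) => huv1 hv.
have n1 := ncTE hT hab hTuc.
have n2 := ncTE hT hab hTcv.
have [h|h] : ((u == a :> nat) && (c == b)) || ((c == a) && (v == b :> nat)) \/
    ((u <= a) && (b <= c) && ((u != a :> nat) || (c != b))) || ((c <= a) && (b <= v) && ((c != a) || (v != b :> nat))).
  move: n1 n2; rewrite /crossn; lia.
- exists u, c, v; split => //; first by apply/andP.
  case/orP: h => /andP[/eqP hu /eqP hc]; apply/orP; [left|right]; subst; rewrite !eqxx //.
- exfalso; case/orP: h => /andP[/andP[h1 h2] h3].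
  + have hc : c < n.+3 by lia.
    have : P (c - u).
      apply/existsP; exists u; apply/existsP; exists (Ordinal hc) => /=.
      rewrite eqxx h1 h2 h3 /TO /=.
      case/orP: hTuc => [/eqP hc1|->] //; lia.
    move/hmin; lia.
  + have hc : c < n.+3 by lia.
    have : P (v - c).
      apply/existsP; exists (Ordinal hc); apply/existsP; exists v => /=.
      rewrite eqxx h1 h2 h3 /TO /=.
      case/orP: hTcv => [/eqP hc1|->] //; lia.
    move/hmin; lia.
Qed.

Lemma H1 a b a' b' c : a <= a' -> b' <= b -> a < c -> c < b -> a' < b' ->
  ((a != a') || (b != b')) -> ~~ crossn a' b' a c -> ~~ crossn a' b' c b -> (b' <= c) || (c <= a').
Proof. rewrite /crossn; lia. Qed.

Lemma H2 a b a' b' s t p q : a <= s -> s <= a' -> b' <= t -> t <= b -> a' < b' ->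
  crossn a b p q -> crossn a' b' p q -> crossn s t p q.
Proof. rewrite /crossn; lia. Qed.

Lemma H3 x p q : crossn x x.+1 p q = false.
Proof. apply/negP; rewrite /crossn; lia. Qed.

Lemma H4 m p q : q < m.+1 -> crossn 0 m p q = false.
Proof. move=> h; apply/negP; rewrite /crossn; lia. Qed.

Lemma H5 u c v a' b' p q : u < c -> c < v -> a' < b' -> crossn u c p q -> crossn a' b' p q ->
  ~~ crossn a' b' u c -> ~~ crossn a' b' c v -> ~~ crossn a' b' u v ->
  ~~ ((u <= a') && (b' <= c)) -> ~~ ((c <= a') && (b' <= v)) -> crossn u v p q.
Proof. rewrite /crossn; lia. Qed.

Lemma H5' u c v a' b' p q : u < c -> c < v -> a' < b' -> crossn c v p q -> crossn a' b' p q ->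
  ~~ crossn a' b' u c -> ~~ crossn a' b' c v -> ~~ crossn a' b' u v ->
  ~~ ((u <= a') && (b' <= c)) -> ~~ ((c <= a') && (b' <= v)) -> crossn u v p q.
Proof. rewrite /crossn; lia. Qed.

Lemma H6 u c v a' b' : u < c -> c < v -> a' < b' ->
  ~~ crossn a' b' u c -> ~~ crossn a' b' c v ->
  ~~ ((u <= a') && (b' <= c)) -> ~~ ((c <= a') && (b' <= v)) ->
  (u <= a') && (b' <= v) -> (u == a') && (v == b').
Proof. rewrite /crossn; lia. Qed.

Lemma H7 a b v a' b' p q : b <= a' -> b' <= v -> a' < b' ->
  crossn a b p q -> crossn a' b' p q -> crossn b v p q.
Proof. rewrite /crossn; lia. Qed.

Lemma H7' u a b a' b' p q : u <= a' -> b' <= a -> a' < b' ->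
  crossn a b p q -> crossn a' b' p q -> crossn u a p q.
Proof. rewrite /crossn; lia. Qed.

Lemma crossnC a b c d : crossn a b c d = crossn c d a b.
Proof. by rewrite /crossn orbC. Qed.

Definition side3 n (T : {set diag n}) y z := [|| TE T y z, TE T z y, TO T y z | TO T z y].

Definition mn (n : nat) (s t a' b' : nat) : nat :=
  if (s <= a') && (b' <= t) then t - s - 1 else n.+3 - (t - s) - 1.

Lemma step n (T : {set diag n}) a b a' b' p q p' q' : triangulation T ->
  inTn T a b -> inTn T a' b' -> ((a != a') || (b != b')) ->
  crossn a b p q -> crossn a' b' p q -> crossn a b p' q' -> crossn a' b' p' q' ->
  q < n.+3 -> q' < n.+3 ->
  exists s t x y z, inTn T s t /\ crossn s t p q /\ crossn s t p' q' /\
    (((x == a) && (y == b)) || ((x == b) && (y == a))) /\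
    (((x == s) && (z == t)) || ((x == t) && (z == s))) /\
    y != z /\ side3 T y z /\
    (((s == a') && (t == b')) || (mn n s t a' b' < mn n a b a' b')).
Proof.
move=> hT hab he hne c1 c2 c3 c4 hq hq'.
case: (inTn_bounds hab) => hab1 hb hab0.
case: (inTn_bounds he) => he1 he2 he0.
have nde := tri_nc hT he hab.
have hee : a' < b' := ltnW he1.
case hnest: ((a <= a') && (b' <= b)).
- have hTO : TO T a b by rewrite /TO hab.
  case: (tri_inside hT hTO) => c [/andP[hac hcb] hTac hTcb].
  have n1 := ncTE hT he hTac.
  have n2 := ncTE hT he hTcb.
  case/andP: hnest => hn1 hn2.
  case/orP: (H1 hn1 hn2 hac hcb hee hne n1 n2) => [hle|hge].
  + have hac' : a <= a by [].
    have hcb' : c <= b := ltnW hcb.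
    have x1 := H2 hac' hn1 hle hcb' hee c1 c2.
    have x2 := H2 hac' hn1 hle hcb' hee c3 c4.
    have hin : inTn T a c.
      by case/orP: hTac => [/eqP hc|] //; move: x1; rewrite -hc H3.
    exists a, c, a, b, c; refine (conj hin (conj x1 (conj x2 (conj _ (conj _ (conj _ (conj _ _))))))).
    * by rewrite !eqxx.
    * by rewrite !eqxx.
    * clear -hcb; lia.
    * by rewrite /side3 hTcb orbT.
    * apply/orP; right; rewrite /mn hn1 hn2 hle /=; clear -hac hcb hle hn1 hn2; lia.
  + have hac' : a <= c := ltnW hac.
    have hcb' : b <= b by [].
    have x1 := H2 hac' hge hn2 hcb' hee c1 c2.
    have x2 := H2 hac' hge hn2 hcb' hee c3 c4.
    have hin : inTn T c b.
      by case/orP: hTcb => [/eqP hc|] //; move: x1; rewrite -hc H3.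
    exists c, b, b, a, c; refine (conj hin (conj x1 (conj x2 (conj _ (conj _ (conj _ (conj _ _))))))).
    * by rewrite !eqxx orbT.
    * by rewrite !eqxx orbT.
    * clear -hac; lia.
    * by rewrite /side3 hTac.
    * apply/orP; right; rewrite /mn hn1 hn2 hge /=; clear -hac hcb hge hn1 hn2; lia.
- have [u [c [v [hucv huv hor]]]] := tri_above hT hab.
  case/andP: hucv => huc hcv.
  case/orP: hor => [/andP[/andP[/eqP hu /eqP hc] hTcv]|/andP[/andP[/eqP hc /eqP hv] hTuc]]; subst.
  + have n1 := ncTE hT he hTcv.
    have n3 := ncTO hT he huv.
    case: (TO_bounds huv) => _ hv.
    case hn2: ((b <= a') && (b' <= v)).
    * case/andP: hn2 => hn2 hn3.
      have x1 := H7 hn2 hn3 hee c1 c2.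
      have x2 := H7 hn2 hn3 hee c3 c4.
      have hin : inTn T b v.
        by case/orP: hTcv => [/eqP hc|] //; move: x1; rewrite -hc H3.
      exists b, v, b, a, v; refine (conj hin (conj x1 (conj x2 (conj _ (conj _ (conj _ (conj _ _))))))).
      -- by rewrite !eqxx orbT.
      -- by rewrite !eqxx.
      -- clear -huc hcv; lia.
      -- by rewrite /side3 huv !orbT.
      -- apply/orP; right; rewrite /mn hn2 hn3 hnest /=; clear -hv hab1 hn2 hn3 hcv; lia.
    * have hnb : ~~ ((a <= a') && (b' <= b)) by rewrite hnest.
      have hnb' : ~~ ((b <= a') && (b' <= v)) by rewrite hn2.
      have x1 := H5 huc hcv hee c1 c2 nde n1 n3 hnb hnb'.
      have x2 := H5 huc hcv hee c3 c4 nde n1 n3 hnb hnb'.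
      have hin : inTn T a v.
        case/orP: huv => [|/andP[/eqP h0 /eqP h1]] //; move: x1; subst; rewrite H4 //.
      exists a, v, a, b, v; refine (conj hin (conj x1 (conj x2 (conj _ (conj _ (conj _ (conj _ _))))))).
      -- by rewrite !eqxx.
      -- by rewrite !eqxx.
      -- clear -huc hcv; lia.
      -- by rewrite /side3 hTcv.
      -- have h6 := H6 huc hcv hee nde n1 hnb hnb'.
         rewrite /mn hnest; case: ifP => h7; first by rewrite h6.
         apply/orP; right; clear -hv hcv huc; lia.
  + have n1 := ncTE hT he hTuc.
    have n3 := ncTO hT he huv.
    case: (TO_bounds huv) => _ hv.
    case hn2: ((u <= a') && (b' <= a)).
    * case/andP: hn2 => hn2 hn3.
      have x1 := H7' hn2 hn3 hee c1 c2.
      have x2 := H7' hn2 hn3 hee c3 c4.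
      have hin : inTn T u a.
        by case/orP: hTuc => [/eqP hc|] //; move: x1; rewrite -hc H3.
      exists u, a, a, b, u; refine (conj hin (conj x1 (conj x2 (conj _ (conj _ (conj _ (conj _ _))))))).
      -- by rewrite !eqxx.
      -- by rewrite !eqxx orbT.
      -- clear -huc hcv; lia.
      -- by rewrite /side3 huv !orbT.
      -- apply/orP; right; rewrite /mn hn2 hn3 hnest /=; clear -hv hab1 hn2 hn3 huc hcv; lia.
    * have hnb' : ~~ ((a <= a') && (b' <= b)) by rewrite hnest.
      have hnb : ~~ ((u <= a') && (b' <= a)) by rewrite hn2.
      have x1 := H5' huc hcv hee c1 c2 n1 nde n3 hnb hnb'.
      have x2 := H5' huc hcv hee c3 c4 n1 nde n3 hnb hnb'.
      have hin : inTn T u b.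
        case/orP: huv => [|/andP[/eqP h0 /eqP h1]] //; move: x1; subst; rewrite H4 //.
      exists u, b, b, a, u; refine (conj hin (conj x1 (conj x2 (conj _ (conj _ (conj _ (conj _ _))))))).
      -- by rewrite !eqxx orbT.
      -- by rewrite !eqxx orbT.
      -- clear -huc hcv; lia.
      -- by rewrite /side3 hTuc orbT.
      -- have h6 := H6 huc hcv hee n1 nde hnb hnb'.
         rewrite /mn hnest; case: ifP => h7; first by rewrite h6.
         apply/orP; right; clear -hv hcv huc; lia.
Qed.
From HB Require Import structures.
From mathcomp Require Import all_boot all_order all_algebra.
From mathcomp Require Import complex.
From mathcomp Require Import reals.
From mathcomp Require Import zify.
Set Implicit Arguments. Unset Strict Implicit. Unset Printing Implicit Defensive.

Lemma diag_eq n (d e : diag n) : dlo d = dlo e :> nat -> dhi d = dhi e :> nat -> d = e.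
Proof.
case: d e => [[x y] h] [[x' y'] h']; rewrite /dlo /dhi /= => h1 h2.
apply: val_inj => /=; congr pair; exact: val_inj.
Qed.

Lemma epts_eq n (d : diag n) (x y : nat) :
  ((x == dlo d :> nat) && (y == dhi d :> nat)) || ((x == dhi d :> nat) && (y == dlo d :> nat)) ->
  epts d = [set inord x; inord y].
Proof.
case/orP => /andP[/eqP -> /eqP ->]; rewrite !inord_val //.
by rewrite /epts setUC.
Qed.

Lemma modinj N x y z : x < N -> y < N -> z < N ->
  (y + N - x) %% N = (z + N - x) %% N -> y = z.
Proof.
move=> hx hy hz; rewrite -!addnBA; try exact: ltnW.
move/eqP; rewrite eqn_modDr !modn_small //; exact/eqP.
Qed.

Lemma side3C n (T : {set diag n}) y z : side3 T y z = side3 T z y.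
Proof. by rewrite /side3; case: (TE T y z); case: (TE T z y); case: (TO T y z); case: (TO T z y). Qed.

Lemma side3_ok n (T : {set diag n}) y z : y < n.+3 -> z < n.+3 -> side3 T y z ->
  poly_edge (inord y : 'I_n.+3) (inord z) ||
  [exists g in T, epts g == [set (inord y : 'I_n.+3); inord z]].
Proof.
move=> hy hz; rewrite /side3 /TE /TO /poly_edge !inordK //.
have hg : forall u v, inTn T u v -> [exists g in T, epts g == [set (inord u : 'I_n.+3); inord v]].
  move=> u v /existsP[g /andP[gT /andP[/eqP hu /eqP hv]]]; apply/existsP; exists g.
  have := @epts_eq _ g u v; rewrite hu hv !eqxx /= => /(_ isT) ->.
  by rewrite gT eqxx.
case/or4P => [/orP[->|/hg ->]|/orP[->|/hg]|/orP[/hg ->|->]|/orP[/hg|->]]; rewrite ?orbT //.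
- by rewrite setUC => ->; rewrite orbT.
- by rewrite setUC => ->; rewrite orbT.
Qed.

Lemma adj_nat n (T : {set diag n}) (d f : diag n) (x y z : nat) :
  ((x == dlo d :> nat) && (y == dhi d :> nat)) || ((x == dhi d :> nat) && (y == dlo d :> nat)) ->
  ((x == dlo f :> nat) && (z == dhi f :> nat)) || ((x == dhi f :> nat) && (z == dlo f :> nat)) ->
  y != z -> side3 T y z ->
  [&& common_triangle T d f, common_triangle T f d & (root_lt d f || root_lt f d)].
Proof.
move=> hd hf hyz hs.
case: (diag_bounds d) => hd1 hd2 _; case: (diag_bounds f) => hf1 hf2 _.
have hx : x < n.+3 by move: hd; clear -hd1 hd2; lia.
have hy : y < n.+3 by move: hd; clear -hd1 hd2; lia.
have hz : z < n.+3 by move: hf; clear -hf1 hf2; lia.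
have ed := epts_eq hd; have ef := epts_eq hf.
have hdf : d != f.
  apply/eqP => hdf; subst f; move: hd hf hyz; clear -hd1; lia.
have hs' : side3 T z y by rewrite side3C.
rewrite /common_triangle hdf eq_sym hdf /=.
apply/and3P; split.
- apply/existsP; exists (inord x); apply/existsP; exists (inord y); apply/existsP; exists (inord z).
  by rewrite ed ef !eqxx side3_ok.
- apply/existsP; exists (inord x); apply/existsP; exists (inord z); apply/existsP; exists (inord y).
  by rewrite ed ef !eqxx side3_ok.
- rewrite /root_lt.
  have hne : (y + n.+3 - x) %% n.+3 != (z + n.+3 - x) %% n.+3.
    by apply/eqP => /(modinj hx hy hz) /eqP; rewrite (negbTE hyz).
  case: (ltngtP ((y + n.+3 - x) %% n.+3) ((z + n.+3 - x) %% n.+3)) => hlt.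
  + apply/orP; left.
    apply/existsP; exists (inord x); apply/existsP; exists (inord y); apply/existsP; exists (inord z).
    by rewrite ed ef !eqxx !inordK.
  + apply/orP; right.
    apply/existsP; exists (inord x); apply/existsP; exists (inord z); apply/existsP; exists (inord y).
    by rewrite ed ef !eqxx !inordK.
  + by rewrite hlt eqxx in hne.
Qed.

Definition Pv n (T : {set diag n}) (al al' : diag n) (i : vtx T) : bool :=
  crosses (val i) al && crosses (val i) al'.

Lemma conn n (T : {set diag n}) (hT : triangulation T) (al al' : diag n) (Q : vtx T -> Prop) :
  (forall i j : vtx T, Pv al al' i -> Pv al al' j -> (arrow T i j || arrow T j i) -> Q i -> Q j) ->
  forall i j, Pv al al' i -> Pv al al' j -> Q i -> Q j.
Proof.
move=> hQ i j hi hj.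
pose m (i : vtx T) := mn n (dlo (val i)) (dhi (val i)) (dlo (val j)) (dhi (val j)).
suff H : forall k i, m i < k -> Pv al al' i -> Q i -> Q j by apply: (H (m i).+1).
elim=> [//|k IH] {}i hk {}hi hQi.
case: (eqVneq i j) => [<- //|hij].
have hne : (dlo (val i) != dlo (val j) :> nat) || (dhi (val i) != dhi (val j) :> nat).
  rewrite -negb_and; apply/negP => /andP[/eqP h1 /eqP h2]; move/eqP: hij; apply.
  by apply: val_inj; apply: diag_eq.
case/andP: (hi) => c1 c3; case/andP: (hj) => c2 c4.
rewrite !crossesE in c1 c2 c3 c4.
have hiT := valP i; have hjT := valP j.
have [s [t [x [y [z [hst [x1 [x2 [hd [hf [hyz [hs hm]]]]]]]]]]]] :=
  step hT (inTnI hiT) (inTnI hjT) hne c1 c2 c3 c4 (ltn_ord _) (ltn_ord _).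
case/existsP: hst => f /andP[fT /andP[/eqP hfs /eqP hft]].
pose k' : vtx T := exist _ f fT.
have hk' : Pv al al' k' by rewrite /Pv /= !crossesE hfs hft x1 x2.
have hadj : arrow T i k' || arrow T k' i.
  have := @adj_nat n T (val i) f x y z hd; rewrite hfs hft => /(_ hf hyz hs).
  case/and3P => ct1 ct2 /orP[rl|rl]; rewrite /arrow /=.
  - by rewrite ct1 rl orbT.
  - by rewrite ct2 rl.
have hQk := hQ _ _ hi hk' hadj hQi.
case/orP: hm => [/andP[/eqP h1 /eqP h2]|hlt].
- have -> : j = k' by apply: val_inj; apply: diag_eq; rewrite /= ?hfs ?hft.
  exact: hQk.
- apply: (IH k') => //.
  have -> : m k' = mn n s t (dlo (val j)) (dhi (val j)) by rewrite /m /= hfs hft.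
  move: hk; rewrite /m; clear -hlt; lia.
Qed.
From HB Require Import structures.
From mathcomp Require Import all_boot all_order all_algebra.
From mathcomp Require Import complex.
From mathcomp Require Import reals.
Set Implicit Arguments. Unset Strict Implicit. Unset Printing Implicit Defensive.
Import Order.TTheory GRing.Theory Num.Theory.
Local Open Scope ring_scope.

Definition msum (K : fieldType) m n (A : 'M[K]_(m, n)) : K := \sum_(i < m) \sum_(j < n) A i j.

Lemma msum0 (K : fieldType) m n : msum (0 : 'M[K]_(m, n)) = 0.
Proof. by rewrite /msum big1 // => i _; rewrite big1 // => j _; rewrite mxE. Qed.

Lemma msum_mul (K : fieldType) m k p (A : 'M[K]_(m, k)) (B : 'M[K]_(k, p)) :
  (k <= 1)%N -> msum (A *m B) = msum A * msum B.
Proof.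
case: k A B => [|[|k]] A B // _.
- have h0 : A *m B = 0 by apply/matrixP => i j; rewrite !mxE big_ord0.
  by rewrite h0 msum0 /msum big1 ?mul0r // => i _; rewrite big_ord0.
- rewrite /msum mulr_suml; apply: eq_bigr => i _.
  rewrite big_ord1 big_ord1 mulr_sumr; apply: eq_bigr => j _.
  by rewrite mxE big_ord1.
Qed.

Lemma msum_entry (K : fieldType) m n (A : 'M[K]_(m, n)) (i : 'I_m) (j : 'I_n) :
  (m <= 1)%N -> (n <= 1)%N -> msum A = A i j.
Proof.
case: m A i => [|[|m]] A i //; first by case: i.
case: n A j => [|[|n]] A j //; first by case: j.
move=> _ _; rewrite /msum !big_ord1.
by rewrite (ord1 i) (ord1 j).
Qed.

Lemma msum_eq (K : fieldType) m n (A B : 'M[K]_(m, n)) :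
  (m <= 1)%N -> (n <= 1)%N -> msum A = msum B -> A = B.
Proof.
move=> hm hn h; apply/matrixP => i j.
by rewrite -(msum_entry A i j hm hn) -(msum_entry B i j hm hn).
Qed.

Lemma msum_zero (K : fieldType) m n (A : 'M[K]_(m, n)) :
  ((m == 0) || (n == 0))%N -> msum A = 0.
Proof.
case: m A => [|m] A; first by rewrite /msum big_ord0.
case: n A => [|n] A //= _; rewrite /msum big1 // => i _; by rewrite big_ord0.
Qed.

Lemma msum_const1 (K : fieldType) m n :
  msum (const_mx 1 : 'M[K]_(m, n)) = (m * n)%:R.
Proof.
rewrite /msum; under eq_bigr do under eq_bigr do rewrite mxE.
rewrite sumr_const card_ord sumr_const card_ord -mulrnA mulnC //.
Qed.


Lemma msumZ (K : fieldType) m n (c : K) (A : 'M[K]_(m, n)) : msum (c *: A) = c * msum A.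
Proof.
rewrite /msum mulr_sumr; apply: eq_bigr => i _; rewrite mulr_sumr; apply: eq_bigr => j _.
by rewrite mxE.
Qed.

Lemma qdim_le1 (R : realType) n (T : {set diag n}) (a : diag n) i :
  (qdim (Malpha R T a) i <= 1)%N.
Proof. by rewrite /=; case: ifP. Qed.

Lemma sM_eq (R : realType) n (T : {set diag n}) (a : diag n) j i :
  msum (qmap (Malpha R T a) j i) =
  if (j \in Supp T a) && (i \in Supp T a) then 1 else 0.
Proof.
rewrite /=; case h: ((j \in Supp T a) && (i \in Supp T a)); last exact: msum0.
by rewrite msum_const1; case/andP: h => -> ->.
Qed.

Lemma morphE (R : realType) n (T : {set diag n}) (a a' : diag n)
  (phi : forall i, 'M[R[i]]_(qdim (Malpha R T a) i, qdim (Malpha R T a') i)) j i :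
  (qmap (Malpha R T a) j i *m phi i = phi j *m qmap (Malpha R T a') j i) <->
  ((if (j \in Supp T a) && (i \in Supp T a) then 1 else 0) * msum (phi i) =
   msum (phi j) * (if (j \in Supp T a') && (i \in Supp T a') then 1 else 0)).
Proof.
split => [h|h].
- by have := congr1 (@msum _ _ _) h; rewrite !msum_mul ?qdim_le1 // !sM_eq.
- apply: msum_eq; rewrite ?qdim_le1 //.
  by rewrite !msum_mul ?qdim_le1 // !sM_eq.
Qed.

Lemma scalar_main n (T : {set diag n}) (hT : triangulation T) (a a' : diag n)
  (K : fieldType) (c : vtx T -> K) :
  (forall i, i \notin Supp T a :&: Supp T a' -> c i = 0) ->
  (forall j i, arrow T j i ->
     (if (j \in Supp T a) && (i \in Supp T a) then 1 else 0) * c i =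
     c j * (if (j \in Supp T a') && (i \in Supp T a') then 1 else 0)) ->
  (forall i j, i \in Supp T a :&: Supp T a' -> j \in Supp T a :&: Supp T a' -> c i = c j) /\
  ((exists j i, [/\ j \in Supp T a :\: Supp T a', i \in Supp T a :&: Supp T a' & arrow T j i]) \/
   (exists j i, [/\ j \in Supp T a :&: Supp T a', i \in Supp T a' :\: Supp T a & arrow T j i]) ->
   forall i, c i = 0).
Proof.
move=> h0 hm.
have hP : forall i, Pv a a' i = (i \in Supp T a :&: Supp T a') by move=> i; rewrite /Pv !inE.
have p1 : forall i j, i \in Supp T a :&: Supp T a' -> j \in Supp T a :&: Supp T a' -> c i = c j.
  move=> i j hi hj.
  apply: (@conn n T hT a a' (fun k => c i = c k)) (_ : c i = c i); rewrite ?hP //.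
  move=> k l; rewrite !hP => hk hl /orP[hkl|hlk] ->.
  - have := hm _ _ hkl; move: hk hl; rewrite !inE => /andP[-> ->] /andP[-> ->] /=.
    by rewrite mul1r mulr1 => ->.
  - have := hm _ _ hlk; move: hk hl; rewrite !inE => /andP[-> ->] /andP[-> ->] /=.
    by rewrite mul1r mulr1.
split=> // hbad.
have [i0 [hi0 ci0]] : exists i0, i0 \in Supp T a :&: Supp T a' /\ c i0 = 0.
  case: hbad => [[j [i [hj hi ha]]]|[j [i [hj hi ha]]]].
  - exists i; split => //.
    have := hm _ _ ha; move: hj hi; rewrite !inE => /andP[/negbTE -> ->] /andP[-> _] /=.
    by rewrite mul1r mulr0.
  - exists j; split => //.
    have := hm _ _ ha; move: hj hi; rewrite !inE => /andP[-> ->] /andP[/negbTE -> ->] /=.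
    by rewrite mul0r mulr1 => <-.
move=> i; case hi: (i \in Supp T a :&: Supp T a').
- by rewrite (p1 i i0).
- by rewrite h0 // hi.
Qed.
From HB Require Import structures.
From mathcomp Require Import all_boot all_order all_algebra.
From mathcomp Require Import complex.
From mathcomp Require Import reals.
Set Implicit Arguments. Unset Strict Implicit. Unset Printing Implicit Defensive.
Import GRing.Theory.
Local Open Scope ring_scope.

Lemma h0_lem (R : realType) n (T : {set diag n}) (a a' : diag n)
  (phi : forall i, 'M[R[i]]_(qdim (Malpha R T a) i, qdim (Malpha R T a') i)) i :
  i \notin Supp T a :&: Supp T a' -> msum (phi i) = 0.
Proof.
move=> hi; apply: msum_zero; rewrite /=.
move: hi; rewrite inE negb_and => /orP[] /negbTE -> //; by rewrite orbT.
Qed.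

Lemma phi0_sum (R : realType) n (T : {set diag n}) (a a' : diag n) i :
  msum (const_mx 1 : 'M[R[i]]_(qdim (Malpha R T a) i, qdim (Malpha R T a') i)) =
  if i \in Supp T a :&: Supp T a' then 1 else 0.
Proof.
rewrite msum_const1 /= in_setI.
by case: (i \in Supp T a); case: (i \in Supp T a'); rewrite /= ?mulr1n.
Qed.

Lemma key_lem (R : realType) n (T : {set diag n}) (hT : triangulation T) (a a' : diag n)
  (phi : forall i, 'M[R[i]]_(qdim (Malpha R T a) i, qdim (Malpha R T a') i)) :
  qmorph (arrow T) phi ->
  (forall i j, i \in Supp T a :&: Supp T a' -> j \in Supp T a :&: Supp T a' -> msum (phi i) = msum (phi j)) /\
  ((exists j i, [/\ j \in Supp T a :\: Supp T a', i \in Supp T a :&: Supp T a' & arrow T j i]) \/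
   (exists j i, [/\ j \in Supp T a :&: Supp T a', i \in Supp T a' :\: Supp T a & arrow T j i]) ->
   forall i, msum (phi i) = 0).
Proof.
move=> hphi.
exact: (@scalar_main n T hT a a' _ (fun i => msum (phi i)) (@h0_lem R n T a a' phi)
    (fun j i hji => proj1 (morphE phi j i) (hphi j i hji))).
Qed.

Unset Implicit Arguments.
Local Close Scope ring_scope.

Theorem mainTheorem12 (R : realType) (n : nat) (T : {set diag n})
  (hT : triangulation T) (a a' : diag n)
  (ha : positive_root T a) (ha' : positive_root T a') :
  let S := Supp T a in
  let S' := Supp T a' in
  (Hom_nonzero (arrow T) (Malpha R T a) (Malpha R T a') <->
    [/\ S :&: S' != set0,
        ~ (exists j i, [/\ j \in S :\: S', i \in S :&: S' & arrow T j i]) &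
        ~ (exists j i, [/\ j \in S :&: S', i \in S' :\: S & arrow T j i])])
  /\ (Hom_nonzero (arrow T) (Malpha R T a) (Malpha R T a') ->
      Hom_dim1 (arrow T) (Malpha R T a) (Malpha R T a')).
Proof.
Local Open Scope ring_scope.
move=> S S'.
have key := @key_lem R n T hT a a'.
pose phi0 := fun i => (const_mx 1 : 'M[R[i]]_(qdim (Malpha R T a) i, qdim (Malpha R T a') i)).
have nz_msum : forall (phi : forall i, 'M[R[i]]_(qdim (Malpha R T a) i, qdim (Malpha R T a') i)) i, phi i != 0 -> msum (phi i) != 0.
  move=> phi i; apply: contra => /eqP h; apply/eqP.
  by apply: msum_eq; rewrite ?qdim_le1 // h msum0.
have fwd : Hom_nonzero (arrow T) (Malpha R T a) (Malpha R T a') ->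
    [/\ S :&: S' != set0,
        ~ (exists j i, [/\ j \in S :\: S', i \in S :&: S' & arrow T j i]) &
        ~ (exists j i, [/\ j \in S :&: S', i \in S' :\: S & arrow T j i])].
  case=> phi [hphi [i0 hi0]].
  have hc := nz_msum _ _ hi0.
  have hin : i0 \in S :&: S'.
    by apply/negPn/negP => /(h0_lem phi) h; rewrite h eqxx in hc.
  have [_ hbad] := key phi hphi.
  split.
  - by apply/set0Pn; exists i0.
  - by move=> hb; move: hc; rewrite (hbad (or_introl hb) i0) eqxx.
  - by move=> hb; move: hc; rewrite (hbad (or_intror hb) i0) eqxx.
have bwd : [/\ S :&: S' != set0,
        ~ (exists j i, [/\ j \in S :\: S', i \in S :&: S' & arrow T j i]) &
        ~ (exists j i, [/\ j \in S :&: S', i \in S' :\: S & arrow T j i])] ->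
    qmorph (arrow T) phi0 /\ exists i0, i0 \in S :&: S' /\ phi0 i0 != 0.
  case=> /set0Pn[i0 hi0] nb1 nb2; split.
  - move=> j i hji; apply/(morphE phi0 j i); rewrite !phi0_sum !in_setI.
    case hjS: (j \in Supp T a); case hjS': (j \in Supp T a');
    case hiS: (i \in Supp T a); case hiS': (i \in Supp T a');
    rewrite /= ?mul1r ?mul0r ?mulr1 ?mulr0 //.
    + exfalso; apply: nb2; exists j, i; split; rewrite /S /S' ?in_setD ?in_setI ?hjS ?hjS' ?hiS ?hiS'; try exact hji; done.
    + exfalso; apply: nb1; exists j, i; split; rewrite /S /S' ?in_setD ?in_setI ?hjS ?hjS' ?hiS ?hiS'; try exact hji; done.
  - exists i0; split => //; apply/eqP => h.
    have := congr1 (@msum _ _ _) h; rewrite msum0 /phi0 phi0_sum hi0 => /eqP; by rewrite oner_eq0.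
split; first by split; [exact: fwd | move=> H; case: (bwd H) => hm [i0 [_ h]]; exists phi0; split => //; exists i0].
move=> H; have [hm [i0 [hi0 hnz]]] := bwd (fwd H).
exists phi0; split => //; first by exists i0.
move=> phi hphi; have [hc _] := key phi hphi.
exists (msum (phi i0)) => i.
apply: msum_eq; rewrite ?qdim_le1 // msumZ phi0_sum.
case hi: (i \in S :&: S').
- by rewrite mulr1 (hc i i0).
- by rewrite mulr0 (h0_lem phi) // hi.
Qed.
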